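(* Let $X$ be a set of $n$ elements and let $\mathcal{P}$ be a family of subsets of $X$. Let $d \geq 1$ and $\delta \geq 1$ be integers such that the VC-dimension of $\mathcal{P}$ is at most $d$ and $|\Delta(S,T)| \geq \delta$ for all distinct $S, T \in \mathcal{P}$. Assume that $s = \frac{4dn}{\delta}$ is an integer with $s \leq n$. Let $A'$ be a subset of $X$ of size $s-1$ chosen uniformly at random among all $(s-1)$-element subsets of $X$. Then $$|\mathcal{P}| \leq 2 \cdot \mathbf{E}\big[\,|\mathcal{P}_{|A'}|\,\big].$$
   Context: For sets $R, S$, $\Delta(R,S) = (R \setminus S) \cup (S \setminus R)$ denotes the symmetric difference. For $Y \subseteq X$, the projection (trace) of $\mathcal{P}$ on $Y$ is $\mathcal{P}_{|Y} = \{ S \cap Y : S \in \mathcal{P}\}$, and $|\mathcal{P}_{|Y}|$ is the number of distinct sets in it. The VC-dimension of $\mathcal{P}$ is the largest size of a set $Y \subseteq X$ with $\mathcal{P}_{|Y} = 2^Y$. *)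

(* Defs.v *)
From HB Require Import structures.
From mathcomp Require Import all_boot all_order all_algebra.
Set Implicit Arguments. Unset Strict Implicit. Unset Printing Implicit Defensive.
Import Order.TTheory GRing.Theory Num.Theory.

Definition symdiff (T : finType) (R S : {set T}) : {set T} :=
  (R :\: S) :|: (S :\: R).

Definition trace (T : finType) (P : {set {set T}}) (Y : {set T}) : {set {set T}} :=
  [set S :&: Y | S in P].

Definition shatters (T : finType) (P : {set {set T}}) (Y : {set T}) : bool :=
  trace P Y == powerset Y.

Definition VCdim_le (T : finType) (P : {set {set T}}) (d : nat) : Prop :=
  forall Y : {set T}, shatters P Y -> #|Y| <= d.

Definition E_uniform_ksubset (T : finType) (k : nat) (f : {set T} -> nat) : rat :=
  ((\sum_(A : {set T} | #|A| == k) f A)%:R / #|[set A : {set T} | #|A| == k]|%:R)%R.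

(* Main.v *)
Require Import Defs.
From mathcomp Require Import all_boot all_order all_algebra.
From mathcomp Require Import zify ring.
Set Implicit Arguments. Unset Strict Implicit. Unset Printing Implicit Defensive.

Section Haus.
Variable X : finType.

Definition edges (F : {set {set X}}) : {set {set X} * X} :=
  [set p | (p.1 \in F) && (p.2 \notin p.1) && (p.2 |: p.1 \in F)].

Lemma card_UI_le (T : finType) (A1 A2 U V : {set T}) :
  A1 \subset U :|: V -> A2 \subset U :&: V -> #|A1| + #|A2| <= #|U| + #|V|.
Proof.
move=> h1 h2; rewrite -[#|U| + _]cardsUI; by apply: leq_add; apply: subset_leq_card.
Qed.

Lemma card_UI_ge (T : finType) (A1 A2 U V : {set T}) :
  U :|: V \subset A1 -> U :&: V \subset A2 -> #|U| + #|V| <= #|A1| + #|A2|.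
Proof.
move=> h1 h2; rewrite -[#|U| + _]cardsUI; by apply: leq_add; apply: subset_leq_card.
Qed.

Lemma sum_le_sub (I : finType) (P1 P2 : pred I) (F : I -> nat) :
  (forall i, P1 i -> P2 i) -> \sum_(i | P1 i) F i <= \sum_(i | P2 i) F i.
Proof.
move=> h; rewrite [X in X <= _]big_mkcond [X in _ <= X]big_mkcond /=.
apply: leq_sum => i _; case: (boolP (P1 i)) => [/h -> //|]; by case: (P2 i).
Qed.

Lemma trace_sub (P : {set {set X}}) Y : trace P Y \subset powerset Y.
Proof.
apply/subsetP => Z /imsetP [S _ ->]; by rewrite inE subsetIr.
Qed.


Lemma setD1I (S Y : {set X}) x : x \notin Y -> (S :\ x) :&: Y = S :&: Y.
Proof.
move=> hx; apply/setP => z; rewrite !inE; case: eqP => // ->.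
by rewrite (negbTE hx) !andbF.
Qed.

Lemma setD1_id (S : {set X}) x : x \notin S -> S :\ x = S.
Proof.
move=> xS; apply/setP => z; rewrite !inE; case: eqP => // ->; by rewrite (negbTE xS).
Qed.

Lemma setU1D1 (S : {set X}) x y : y != x -> y |: (S :\ x) = (y |: S) :\ x.
Proof.
move=> yx; apply/setP => z; rewrite !inE; case: (eqVneq z y) => [->|] //=.
by rewrite yx.
Qed.

Lemma VC_F1 (F : {set {set X}}) x d : VCdim_le F d ->
  VCdim_le [set S :\ x | S in F] d.
Proof.
move=> hF Y /eqP hY.
have xY : x \notin Y.
  apply/negP => xY.
  have : Y \in trace [set S :\ x | S in F] Y by rewrite hY inE.
  case/imsetP => S1 /imsetP [S _ ->] /setP /(_ x).
  by rewrite !inE xY eqxx.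
apply: hF; apply/eqP; rewrite -hY; apply/setP => Z.
apply/imsetP/imsetP => [[S hS ->]|[S1 /imsetP [S hS ->] ->]].
  exists (S :\ x); first by apply: imset_f.
  by rewrite setD1I.
by exists S => //; rewrite setD1I.
Qed.

Lemma VC_F2 (F : {set {set X}}) x d Y : VCdim_le F d ->
  shatters [set S in F | (x \notin S) && (x |: S \in F)] Y -> #|Y|.+1 <= d.
Proof.
move=> hF /eqP hY.
have xY : x \notin Y.
  apply/negP => xY.
  have : Y \in trace [set S in F | (x \notin S) && (x |: S \in F)] Y by rewrite hY inE.
  case/imsetP => S; rewrite inE => /andP [_ /andP [xS _]] /setP /(_ x).
  by rewrite !inE xY andbT (negbTE xS).
have -> : #|Y|.+1 = #|x |: Y| by rewrite cardsU1 xY.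
apply: hF.
rewrite /shatters eqEsubset trace_sub /=.
apply/subsetP => Z; rewrite inE => ZxY.
have : Z :\ x \in trace [set S in F | (x \notin S) && (x |: S \in F)] Y.
  rewrite hY inE; apply/subsetP => z; rewrite !inE => /andP [zx zZ].
  by move/subsetP: ZxY => /(_ z zZ); rewrite !inE (negbTE zx).
case/imsetP => S; rewrite inE => /andP [SF /andP [xS xSF]] eZ.
apply/imsetP; case: (boolP (x \in Z)) => xZ.
  exists (x |: S) => //; apply/setP => z; move/setP: (eZ) => /(_ z); rewrite !inE.
  case: (eqVneq z x) => [->|zx] /=; first by rewrite xZ.
  by move=> ->.
exists S => //; apply/setP => z; move/setP: (eZ) => /(_ z); rewrite !inE.
case: (eqVneq z x) => [->|zx] /=; first by rewrite (negbTE xZ) (negbTE xS).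
by move=> ->.
Qed.


Lemma haussler n : forall (D : {set X}) (F : {set {set X}}) d,
  #|D| = n -> (forall S, S \in F -> S \subset D) -> VCdim_le F d ->
  #|edges F| <= d * #|F|.
Proof.
elim: n => [|n IH] D F d hD hFD hF.
  have D0 : D = set0 by apply/eqP; rewrite -cards_eq0 hD.
  have -> : edges F = set0.
    apply/setP => p; rewrite !inE; apply/negbTE/negP => /andP [_ h].
    move: (hFD _ h); rewrite D0 subset0 => /eqP /setP /(_ p.2).
    by rewrite !inE eqxx.
  by rewrite cards0.
have : 0 < #|D| by rewrite hD.
case/card_gt0P => x xD.
set F1 := [set S :\ x | S in F].
set F2 := [set S in F | (x \notin S) && (x |: S \in F)].
have hD' : #|D :\ x| = n by move: hD; rewrite (cardsD1 x D) xD add1n => -[].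
have hF1D : forall S, S \in F1 -> S \subset D :\ x.
  move=> S /imsetP [S0 hS0 ->]; exact: setSD (hFD _ hS0).
have hF2D : forall S, S \in F2 -> S \subset D :\ x.
  move=> S; rewrite inE => /andP [hS /andP [xS _]].
  apply/subsetP => z zS; rewrite !inE (subsetP (hFD _ hS) _ zS) andbT.
  by apply/negP => /eqP ezx; move: xS; rewrite -ezx zS.
have IH1 := IH _ _ _ hD' hF1D (VC_F1 (x:=x) hF).
have IH2 : #|edges F2| <= d.-1 * #|F2|.
  apply: (IH _ _ _ hD' hF2D) => Y hY; move: (VC_F2 (x:=x) hF hY); by case: (d) {hF IH1}.
set Fo := [set S in F | x \notin S].
set Fi := [set S in F | x \in S].
have cF : #|F1| + #|F2| <= #|F|.
  apply: (@leq_trans (#|Fo| + #|[set S :\ x | S in Fi]|)).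
    apply: card_UI_le.
      apply/subsetP => T /imsetP [S hS ->]; rewrite in_setU.
      case: (boolP (x \in S)) => xS.
        by apply/orP; right; apply: imset_f; rewrite inE hS xS.
      apply/orP; left; rewrite inE (setDidPl _) ?hS ?xS //.
      by rewrite disjoint_sym disjoints1.
    apply/subsetP => T; rewrite !inE => /andP [TF /andP [xT xTF]].
    rewrite TF xT /=; apply/imsetP; exists (x |: T); last by rewrite setU1K.
    by rewrite inE xTF setU11.
  have -> : #|F| = #|Fo| + #|Fi|.
    rewrite -(cardsID [set S : {set X} | x \in S] F) addnC.
    by congr (_ + _); apply: eq_card => S; rewrite !inE andbC.
  by rewrite leq_add2l leq_imset_card.
set E := edges F.
set Ex := [set p in E | p.2 == x].
set N0 := [set p in E | (p.2 != x) && (x \notin p.1)].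
set N1 := [set p in E | (p.2 != x) && (x \in p.1)].
pose phi := fun p : {set X} * X => (p.1 :\ x, p.2).
have c1 : #|E| <= #|Ex| + (#|N0| + #|N1|).
  apply: leq_trans (leq_add (leqnn _) (leq_card_setU N0 N1).1).
  apply: leq_trans (leq_card_setU _ _).1.
  apply: subset_leq_card; apply/subsetP => p pE; rewrite !inE; move: pE; rewrite /E /edges inE => -> /=.
  by case: eqP => //= _; case: (x \in p.1).
have c2 : #|Ex| <= #|F2|.
  apply: leq_trans (leq_imset_card (fun S => (S, x)) F2).
  apply: subset_leq_card; apply/subsetP => -[S y]; rewrite !inE /= => /andP [].
  move=> /andP [/andP [SF yS] ySF] /eqP eyx; subst y.
  by apply: imset_f; rewrite inE SF yS ySF.
have c3 : #|N1| = #|phi @: N1|.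
  apply/esym/card_in_imset => -[S y] [S' y']; rewrite !inE /=.
  move=> /andP [_ /andP [_ xS]] /andP [_ /andP [_ xS']] [eS ->].
  by rewrite -(setD1K xS) -(setD1K xS') eS.
have c4 : #|N0| + #|phi @: N1| <= #|edges F1| + #|edges F2|.
  apply: card_UI_ge.
    apply/subsetP => p; rewrite in_setU => /orP [].
      rewrite !inE => /andP [/andP [/andP [SF yS] ySF] /andP [yx xS]].
      rewrite yS /=; apply/andP; split.
        by rewrite andbT;  apply/imsetP; exists p.1 => //; rewrite setD1_id.
      apply/imsetP; exists (p.2 |: p.1) => //; rewrite setD1_id // !inE.
      by rewrite negb_or eq_sym yx.
    case/imsetP => -[S y]; rewrite !inE /= => /andP [/andP [/andP [SF yS] ySF] /andP [yx xS]] ->.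
    rewrite /= !inE (negbTE yS) andbF /= andbT; apply/andP; split; first by apply/imsetP; exists S.
    by rewrite setU1D1 //; apply/imsetP; exists (y |: S).
  apply/subsetP => p; rewrite in_setI => /andP [].
  rewrite !inE => /andP [/andP [/andP [TF yT] yTF] /andP [yx xT]].
  case/imsetP => -[S y]; rewrite !inE /= => /andP [/andP [/andP [SF yS] ySF] /andP [_ xS]] ep.
  have eT : p.1 = S :\ x by rewrite ep.
  have ey : p.2 = y by rewrite ep.
  have eS : S = x |: p.1 by rewrite eT setD1K.
  rewrite TF yT yTF xT /= -eS SF /= negb_or xT andbT eq_sym yx /=.
  by rewrite setUCA -eS ey.
have cE : #|edges F| <= #|F2| + #|edges F1| + #|edges F2|.
  rewrite -addnA; apply: leq_trans c1 _; apply: leq_add => //.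
  by rewrite c3.
case: d hF IH1 IH2 => [|d'] hF IH1 IH2.
  have F20 : #|F2| = 0.
    apply/eqP; rewrite cards_eq0; apply/eqP/setP => S; rewrite in_set0.
    apply/negbTE/negP => SF2.
    have : shatters F2 set0.
      rewrite /shatters eqEsubset trace_sub /=; apply/subsetP => Z.
      rewrite powerset0 inE => /eqP ->; apply/imsetP; exists S => //.
      by rewrite setI0.
    by move/(VC_F2 (x:=x) hF).
  move: cE IH1 IH2; rewrite /E F20 !mul0n; lia.
move: cE cF IH1 IH2; rewrite /E => h1 h2 h3 h4.
apply: leq_trans h1 _; apply: leq_trans _ (leq_mul (leqnn d'.+1) h2).
rewrite mulnDr [d'.+1 * #|F2|]mulSn addnCA -addnA leq_add2l.
by apply: leq_add.
Qed.


Lemma sum_lt K m : \sum_(t < K) (t < m) = minn K m.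
Proof.
elim: K => [|K IH]; first by rewrite big_ord0 min0n.
rewrite big_ord_recr /= IH; lia.
Qed.

Lemma minn_sum K a b : a <= K -> b <= K ->
  minn a b = \sum_(t < K) ((t < a) && (t < b)).
Proof.
move=> aK bK; rewrite (eq_bigr (fun t : 'I_K => (t < minn a b) : nat)).
  rewrite sum_lt; lia.
by move=> t _; rewrite leq_min.
Qed.

Definition wt (P : {set {set X}}) (A T : {set X}) := #|[set S in P | S :&: A == T]|.

Definition W (P : {set {set X}}) (A : {set X}) (x : X) :=
  \sum_(T : {set X} | x \notin T) minn (wt P A T) (wt P A (x |: T)).

Lemma wt_le P A T : wt P A T <= #|P|.
Proof. by apply: subset_leq_card; apply/subsetP => S; rewrite inE => /andP []. Qed.

Lemma sum_wt P A : \sum_T wt P A T = #|P|.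
Proof.
rewrite (eq_bigr (fun T => \sum_(S in P) ((S :&: A == T) : nat))); last first.
  move=> T _; rewrite /wt -sum1_card big_mkcond [RHS]big_mkcond /=.
  by apply: eq_bigr => S _; rewrite inE; case: (S \in P).
rewrite exchange_big /= -sum1_card; apply: eq_bigr => S _.
rewrite (bigD1 (S :&: A)) //= eqxx big1 // => T /negbTE.
by rewrite eq_sym => ->.
Qed.

Lemma VC_sub (P G : {set {set X}}) A d :
  (forall T, T \in G -> exists2 S, S \in P & T = S :&: A) ->
  VCdim_le P d -> VCdim_le G d.
Proof.
move=> hG hP Y /eqP hY; apply: hP.
have YA : Y \subset A.
  have : Y \in trace G Y by rewrite hY inE.
  case/imsetP => T /hG [S _ ->] ->; by rewrite setIAC subsetIr.
rewrite /shatters eqEsubset trace_sub /=; apply/subsetP => Z.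
rewrite -hY; case/imsetP => T /hG [S SP ->] ->; apply/imsetP; exists S => //.
by rewrite -setIA (setIidPr YA).
Qed.

Lemma card_edges F :
  #|edges F| = \sum_x \sum_(T : {set X} | x \notin T) ((T \in F) && (x |: T \in F)).
Proof.
transitivity (\sum_(S : {set X}) \sum_(y : X) (if (S, y) \in edges F then 1 else 0)).
  rewrite pair_bigA /= -sum1_card big_mkcond /=; by apply: eq_bigr => -[].
rewrite exchange_big /=.
apply: eq_bigr => y _; rewrite [RHS]big_mkcond /=; apply: eq_bigr => S _.
rewrite inE /=; by case: (y \in S); rewrite ?andbF ?andbT //; case: (S \in F).
Qed.

Lemma sumW_le P A d : VCdim_le P d -> \sum_x W P A x <= d * #|P|.
Proof.
move=> hP.
pose K := #|P|.
have -> : \sum_x W P A x =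
   \sum_(t < K) \sum_x \sum_(T : {set X} | x \notin T)
       ((t < wt P A T) && (t < wt P A (x |: T))).
  rewrite exchange_big /=; apply: eq_bigr => x _.
  rewrite /W exchange_big /=; apply: eq_bigr => T _.
  by apply: minn_sum; apply: wt_le.
apply: (@leq_trans (\sum_(t < K) d * #|[set T | t < wt P A T]|)).
  apply: leq_sum => t _.
  have hV : VCdim_le [set T | t < wt P A T] d.
    apply: (VC_sub (A := A)) hP => T; rewrite inE => ht.
    have : 0 < wt P A T by apply: leq_ltn_trans ht.
    case/card_gt0P => S.
    by rewrite inE => /andP [SP /eqP <-]; exists S.
  have := @haussler #|[set: X]| setT [set T | t < wt P A T] d erefl
     (fun S _ => subsetT S) hV.
  rewrite card_edges; apply: leq_trans; apply: eq_leq.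
  apply: eq_bigr => x _; apply: eq_bigr => T _; by rewrite !inE.
rewrite -big_distrr /= leq_mul2l; apply/orP; right.
rewrite -(sum_wt P A) (eq_bigr (fun t : 'I_K => \sum_T ((t < wt P A T) : nat))).
  rewrite exchange_big /=; apply: leq_sum => T _; rewrite sum_lt; exact: geq_minr.
by move=> t _; rewrite -sum1_card big_mkcond /=; apply: eq_bigr => T _; rewrite inE.
Qed.


Lemma card_sub_sum (T : finType) (C : {set T}) (p : pred T) :
  #|[set S in C | p S]| = \sum_(S in C) p S.
Proof.
rewrite -sum1_card big_mkcond [RHS]big_mkcond /=.
by apply: eq_bigr => S _; rewrite inE; case: (S \in C); case: (p S).
Qed.

Lemma class_bound (C : {set {set X}}) (B : {set X}) delta :
  (forall S T, S \in C -> T \in C -> S != T -> delta <= #|symdiff S T|) ->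
  (forall S T, S \in C -> T \in C -> S :&: B = T :&: B) ->
  delta * (#|C| - 1) <=
  2 * \sum_(x in ~: B) minn #|[set S in C | x \notin S]| #|[set S in C | x \in S]|.
Proof.
move=> hd hB.
pose a x := #|[set S in C | x \in S]|.
pose b x := #|[set S in C | x \notin S]|.
have eab : forall x, b x + a x = #|C|.
  move=> x; rewrite /a /b addnC -(cardsID [set S : {set X} | x \in S] C).
  by congr (_ + _); apply: eq_card => S; rewrite !inE andbC.
have hi : \sum_(x in ~: B) b x * a x = \sum_(S in C) \sum_(T in C) #|S :\: T|.
  transitivity (\sum_(x in ~: B) \sum_(S in C) \sum_(T in C) ((x \in S) * (x \notin T))).
    apply: eq_bigr => x _; rewrite /a /b !card_sub_sum mulnC big_distrl /=.
    by apply: eq_bigr => S _; rewrite big_distrr.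
  rewrite exchange_big /=; apply: eq_bigr => S SC.
  rewrite exchange_big /=; apply: eq_bigr => T TC.
  rewrite -(@eq_bigr _ _ _ _ _ _ (fun x => ((x \in S) && (x \notin T)) : nat)) //.
  rewrite -card_sub_sum; apply: eq_card => x; rewrite !inE andbC.
  case: (boolP (x \in S)) => //= xS; case: (boolP (x \in T)) => //= xT.
  apply/negP => xB; move/setP: (hB _ _ SC TC) => /(_ x).
  by rewrite !inE xS xB (negbTE xT).
  by move=> x _; case: (x \in S); case: (x \in T).
have hii : \sum_(x in ~: B) b x * a x <= #|C| * \sum_(x in ~: B) minn (b x) (a x).
  rewrite big_distrr; apply: leq_sum => x _; rewrite -(eab x).
  case: (leqP (b x) (a x)) => h /=.
    by rewrite mulnC leq_mul2r leq_addl orbT.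
  by rewrite leq_mul2r leq_addr orbT.
have hiii : delta * (#|C| * (#|C| - 1)) <= 2 * \sum_(S in C) \sum_(T in C) #|S :\: T|.
  rewrite mul2n -addnn {2}exchange_big -big_split /=.
  have -> : delta * (#|C| * (#|C| - 1)) = \sum_(S in C) ((#|C| - 1) * delta) by rewrite sum_nat_const mulnCA [delta * _]mulnC.
  apply: leq_sum => S SC.
  rewrite -big_split /=.
  have -> : (#|C| - 1) * delta = \sum_(T in C) ((S != T) * delta).
    rewrite -big_distrl /= -card_sub_sum; congr (_ * _).
    rewrite (cardsD1 S C) SC add1n subn1 /=; apply: eq_card => T; rewrite !inE.
    by rewrite eq_sym andbC.
  apply: leq_sum => T TC; case: (eqVneq S T) => [_|ST]; first by rewrite mul0n.
  rewrite mul1n; apply: leq_trans (hd _ _ SC TC ST) _.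
  exact: (leq_card_setU _ _).1.
case: (posnP #|C|) => [->|Cpos]; first by rewrite muln0.
rewrite -(leq_pmul2l Cpos) mulnCA; apply: leq_trans hiii _.
rewrite -hi mulnCA leq_mul2l hii orbT //.
Qed.


Lemma trI1 (S B Q : {set X}) x : x \notin B -> x \notin Q ->
  (S :&: (x |: B) == Q) = (S :&: B == Q) && (x \notin S).
Proof.
move=> xB xQ; case: (boolP (x \in S)) => xS /=.
  rewrite andbF; apply/negbTE/eqP => e; move: xQ; by rewrite -e !inE xS eqxx.
rewrite andbT; congr (_ == _); apply/setP => z; rewrite !inE.
by case: eqP => // ->; rewrite (negbTE xS).
Qed.

Lemma trI2 (S B Q : {set X}) x : x \notin B -> x \notin Q ->
  (S :&: (x |: B) == x |: Q) = (S :&: B == Q) && (x \in S).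
Proof.
move=> xB xQ; case: (boolP (x \in S)) => xS /=.
  rewrite andbT.
  have -> : S :&: (x |: B) = x |: (S :&: B).
    apply/setP => z; rewrite !inE; by case: eqP => // ->; rewrite xS.
  apply/eqP/eqP => [e|->] //.
  have xSB : x \notin S :&: B by rewrite inE (negbTE xB) andbF.
  by rewrite -(setU1K xSB) e setU1K.
rewrite andbF; apply/negbTE/eqP => e; have := setU11 x Q.
by rewrite -e !inE (negbTE xS).
Qed.

Lemma B_bound (P : {set {set X}}) B delta :
  (forall S T, S \in P -> T \in P -> S != T -> delta <= #|symdiff S T|) ->
  delta * (#|P| - #|trace P B|) <= 2 * \sum_(x in ~: B) W P (x |: B) x.
Proof.
move=> hd.
pose C Q := [set S in P | S :&: B == Q].
have xQ : forall x Q, x \notin B -> Q \in trace P B -> x \notin Q.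
  move=> x Q xB /imsetP [S _ ->]; by rewrite inE (negbTE xB) andbF.
have step1 : forall x, x \in ~: B ->
  \sum_(Q in trace P B) minn #|[set S in C Q | x \notin S]| #|[set S in C Q | x \in S]|
    <= W P (x |: B) x.
  move=> x; rewrite inE => xB.
  apply: (@leq_trans (\sum_(Q in trace P B) minn (wt P (x |: B) Q) (wt P (x |: B) (x |: Q)))).
    apply: eq_leq; apply: eq_bigr => Q hQ; have xQ' := xQ _ _ xB hQ.
    congr minn; apply: eq_card => S; rewrite !inE.
      by rewrite trI1 // andbA.
    by rewrite trI2 // andbA.
  by apply: sum_le_sub => Q /(xQ _ _ xB).
have step2 : \sum_(Q in trace P B) delta * (#|C Q| - 1) <= 2 * \sum_(x in ~: B) W P (x |: B) x.
  apply: (@leq_trans (2 * \sum_(x in ~: B) \sum_(Q in trace P B)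
     minn #|[set S in C Q | x \notin S]| #|[set S in C Q | x \in S]|)); last first.
    by rewrite leq_mul2l; apply/orP; right; apply: leq_sum => x /step1.
  rewrite exchange_big big_distrr /=; apply: leq_sum => Q _.
  apply: class_bound.
    by move=> S T; rewrite !inE => /andP [SP _] /andP [TP _]; apply: hd.
  by move=> S T; rewrite !inE => /andP [_ /eqP ->] /andP [_ /eqP ->].
apply: leq_trans step2; rewrite -big_distrr /= leq_mul2l; apply/orP; right.
have sumC : \sum_(Q in trace P B) #|C Q| = #|P|.
  rewrite -(sum_wt P B) [RHS](bigID (fun Q => Q \in trace P B)) /=.
  rewrite [X in _ = _ + X]big1 ?addn0 //.
  move=> Q QB; apply/eqP; rewrite cards_eq0; apply/eqP/setP => S; rewrite inE in_set0.
  apply/negbTE/andP => -[SP /eqP eQ]; move/negP: QB; apply; rewrite -eQ; exact: imset_f.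
have C1 : forall Q, Q \in trace P B -> 0 < #|C Q|.
  move=> Q /imsetP [S SP ->]; apply/card_gt0P; exists S; by rewrite inE SP eqxx.
rewrite -sumC -[X in _ - X]sum1_card.
rewrite leq_subLR -big_split /=; apply: leq_sum => Q /C1 h.
by rewrite subnKC.
Qed.


Lemma dcount (F : {set X} -> X -> nat) k :
  \sum_(A : {set X} | #|A| == k) \sum_(x in ~: A) F (x |: A) x =
  \sum_(A : {set X} | #|A| == k.+1) \sum_(x in A) F A x.
Proof.
rewrite !pair_big_dep /=.
rewrite [RHS](reindex_onto (fun p : {set X} * X => (p.2 |: p.1, p.2))
                           (fun p : {set X} * X => (p.1 :\ p.2, p.2))) /=; last first.
  by move=> -[A x] /= /andP [_ xA]; rewrite setD1K.
apply: eq_bigl => -[A x] /=; rewrite in_setC setU11 andbT.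
case: (boolP (x \in A)) => xA /=.
  rewrite andbF; apply/esym/negbTE/andP => -[_ /eqP [e]].
  by move: xA; rewrite -e !inE eqxx.
by rewrite andbT setU1K // eqxx andbT cardsU1 xA add1n eqSS.
Qed.

End Haus.

Import GRing.Theory Num.Theory.
Unset Implicit Arguments.
Set Strict Implicit.

Theorem lemma1 (X : finType) (P : {set {set X}}) (d delta s : nat) :
  1 <= d -> 1 <= delta ->
  VCdim_le P d ->
  (forall S T, S \in P -> T \in P -> S != T -> delta <= #|symdiff S T|) ->
  s * delta = 4 * d * #|X| ->
  s <= #|X| ->
  (#|P|%:R <= 2 * @E_uniform_ksubset X s.-1 (fun A => #|trace P A|))%R.
Proof.
move=> d1 dl1 hVC hd hs sn.
rewrite /E_uniform_ksubset.
set k := s.-1.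
set Sig := \sum_(A : {set X} | #|A| == k) #|trace P A|.
set N := #|[set A : {set X} | #|A| == k]|.
have Npos : 0 < N by rewrite /N card_draws bin_gt0 /k; lia.
rewrite mulrA ler_pdivlMr ?ltr0n // -natrM -natrM ler_nat.
have eN : N = \sum_(A : {set X} | #|A| == k) 1.
  by rewrite /N -sum1_card; apply: eq_bigl => A; rewrite inE.
case: (posnP #|X|) => [n0|npos].
  case: (set_0Vmem P) => [->|[S0 SP]]; first by rewrite cards0.
  have P1 : #|P| <= 1.
    apply: (@leq_trans #|[set set0 : {set X}]|); last by rewrite cards1.
    apply: subset_leq_card; apply/subsetP => S _; rewrite inE -cards_eq0 -leqn0.
    by rewrite -n0 max_card.
  have SigN : N <= Sig.
    rewrite eN; apply: leq_sum => A _; apply/card_gt0P; exists (S0 :&: A).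
    exact: imset_f.
  apply: (@leq_trans (1 * N)); first by rewrite leq_mul2r P1 orbT.
  rewrite mul1n; apply: leq_trans SigN _; exact: leq_pmull.
have spos : 0 < s.
  have : 0 < 4 * d * #|X| by rewrite !muln_gt0 d1 npos.
  by rewrite -hs muln_gt0 => /andP [].
have sk : s = k.+1 by rewrite /k prednK.
set M := #|[set A : {set X} | #|A| == k.+1]|.
set p := #|P|.
have h1 : delta * (N * p - Sig) <=
    2 * \sum_(A : {set X} | #|A| == k) \sum_(x in ~: A) W P (x |: A) x.
  apply: (@leq_trans (\sum_(A : {set X} | #|A| == k) delta * (p - #|trace P A|))).
    rewrite -big_distrr /= leq_mul2l; apply/orP; right.
    have e : \sum_(A : {set X} | #|A| == k) (p - #|trace P A|) + Sig = N * p.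
      rewrite -big_split /= eN big_distrl /=; apply: eq_bigr => A _.
      by rewrite subnK ?mul1n // leq_imset_card.
    by rewrite -e addnK.
  rewrite big_distrr /=; apply: leq_sum => A _; exact: B_bound.
have h2 : \sum_(A : {set X} | #|A| == k) \sum_(x in ~: A) W P (x |: A) x <= M * (d * p).
  rewrite dcount.
  have -> : M * (d * p) = \sum_(A : {set X} | #|A| == k.+1) (d * p).
    by rewrite /M -sum_nat_const; apply: eq_bigl => A; rewrite inE.
  apply: leq_sum => A _; apply: leq_trans (sumW_le A hVC).
  by apply: sum_le_sub.
have h3 : N * (#|X| - k) = M * k.+1.
  have := @dcount X (fun _ _ => 1) k.
  rewrite (eq_bigr (fun A => #|X| - k)); last first.
    by move=> A /eqP hA; rewrite sum1_card -hA -(cardsC A) addKn.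
  rewrite [RHS](eq_bigr (fun A => k.+1)); last first.
    by move=> A /eqP hA; rewrite sum1_card hA.
  have sc : forall j c, \sum_(i : {set X} | #|i| == j) c = #|[set A : {set X} | #|A| == j]| * c.
    by move=> j c; rewrite -sum_nat_const; apply: eq_bigl => A; rewrite inE.
  by rewrite !sc.
clearbody p Sig N M.
have h4 := leq_trans h1 (leq_mul (leqnn 2) h2).
have [Y eY] : exists Y, Y = N * p - Sig by exists (N * p - Sig).
rewrite -eY in h4; clear h1 h2.
move: #|X| hs sn npos h3 => n hs sn npos h3.
have h5 : (d * n) * (4 * Y) <= (d * n) * (2 * (p * N)).
  have e1 : (d * n) * (4 * Y) = (s * delta) * Y by rewrite hs; ring.
  rewrite e1.
  have : s * (delta * Y) <= s * (2 * (M * (d * p))) by rewrite leq_mul2l h4 orbT.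
  rewrite mulnA => h; apply: leq_trans h _.
  have e2 : s * (2 * (M * (d * p))) = 2 * d * p * (N * (n - k)) by rewrite h3 sk; ring.
  rewrite e2.
  have : N * (n - k) <= N * n by rewrite leq_mul2l leq_subr orbT.
  move=> h; apply: leq_trans (leq_mul (leqnn _) h) _.
  by apply: eq_leq; ring.
rewrite leq_pmul2l ?muln_gt0 ?d1 ?npos // in h5.
nia.
Qed.
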